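(* Let $\mathcal N=\{N_1,\ldots,N_\ell\}$ ($\ell\ge4$) be a family of $k$-sets satisfying properties (i) and (ii) below, and fix any run of the decomposition process described in the context. Let $0\le j\le t$, $1\le i\le\ell_j$, $Y\subseteq N_i$ with $|Y|\le j$, and let $C$ be a $3$-element set with $C\subseteq\bigl(N_i\cup\{a_i^{(0)},\dots,a_i^{(j)}\}\bigr)\setminus Y$ and $C\cap(V\setminus N_r)\ne\varnothing$ for all $r=1,\dots,\ell$. Let $p=C\cap N_i$. Then: (a) $|p|=1$ or $|p|=2$; (b) if $|p|=1$, then the vertex $v$ of $p$ lies in $(N_i\setminus Y)\cap G$ and $v$ is private for $N_i$ at time $j$; (c) if $|p|=2$, then $p$ is a $2$-subset of $N_i\setminus Y$ and $p$ is a private pair for $N_i$ at time $j$.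
   Context: Setting: $k\ge3$, $\mathcal N=\{N_1,\dots,N_\ell\}$ a family of $k$-subsets, $V=\bigcup N_i$, $n=|V|$, $m=n-k$, satisfying (i) $\bigcap_{i}N_i=\varnothing$ but $\bigcap_{j\ne i}N_j\ne\varnothing$ for all $i$; (ii) every $S\subseteq V$ with $|S|\ge k+1$ contains a $3$-set $T$ not contained in any $N_i$. Assume $\ell\ge4$. Decomposition process: Stage $0$: $\ell_0=\ell$; for each $i\le\ell_0$ choose $a_i^{(0)}\in\bigcap_{r\ne i}N_r$; kernel $A^{(0)}=\{a_1^{(0)},\dots,a_{\ell_0}^{(0)}\}$. Having defined stages $0,\dots,j$ (with surviving sets $N_1,\dots,N_{\ell_j}$, $\ell_j\ge4$, and kernels $A^{(0)},\dots,A^{(j)}$), consider $R^{(j)}=\{N_r\setminus\bigcup_{s\le j}A^{(s)} : r\le\ell_j\}$, which has empty intersection. If every subfamily of $R^{(j)}$ minimal with respect to having empty intersection has only $2$ or $3$ members, stop and set $t=j$. Otherwise choose such a minimal subfamily with at least $4$ members; after reindexing assume it consists of the truncations $N_r^{(j+1)}=N_r\setminus\bigcup_{s\le j}A^{(s)}$, $r\le\ell_{j+1}$; choose $a_i^{(j+1)}\in\bigcap_{r\le\ell_{j+1},r\ne i}N_r^{(j+1)}$ for $i\le\ell_{j+1}$, and let $A^{(j+1)}$ be the set of these. Let $A=\bigcup_{s=0}^tA^{(s)}$ (kernel vertices) and $G=V\setminus A$ (garbage vertices). Privacy: for $i\le\ell_j$, a vertex $v\in N_i$ is private for $N_i$ at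 time $j$ if no $N_r$ with $r\le\ell_j$, $r\ne i$, contains $v$; a $2$-set $p\subseteq N_i$ is a private pair for $N_i$ at time $j$ if no $N_r$ with $r\le\ell_j$, $r\neq i$, contains $p$. *)

(* Defs.v *)
From mathcomp Require Import all_boot.
Set Implicit Arguments. Unset Strict Implicit. Unset Printing Implicit Defensive.

(* Indexing conventions (0-based): the family is N 0, ..., N (l-1) of sets of
   vertices of a finite type T.  A run of the decomposition process is given by
   t (the last stage), L : nat -> nat (L j = ell_j) and a : nat -> nat -> T
   (a j i = a_i^{(j)}, meaningful for j <= t, i < L j).  The reindexing of the
   process is global: the survivors at stage j+1 are N 0, ..., N (L (j+1) - 1). *)

Section Defs.
Variable T : finType.

Definition union_V (l : nat) (N : nat -> {set T}) : {set T} :=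
  \bigcup_(i < l) N i.

Definition good_family (k l : nat) (N : nat -> {set T}) : Prop :=
  [/\ 3 <= k,
      forall i, i < l -> #|N i| = k,
      \bigcap_(i < l) N i = set0,
      forall i, i < l -> \bigcap_(r < l | nat_of_ord r != i) N r != set0 &
      forall S : {set T}, S \subset union_V l N -> k.+1 <= #|S| ->
        exists T3 : {set T},
          [/\ T3 \subset S, #|T3| = 3 & forall i, i < l -> ~~ (T3 \subset N i)]].

Definition kernel (L : nat -> nat) (a : nat -> nat -> T) (s : nat) : {set T} :=
  [set a s (nat_of_ord i) | i : 'I_(L s)].

Definition removed (L : nat -> nat) (a : nat -> nat -> T) (j : nat) : {set T} :=
  \bigcup_(s < j.+1) kernel L a s.

Definition trunc (N : nat -> {set T}) (L : nat -> nat) (a : nat -> nat -> T)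
    (j r : nat) : {set T} :=
  if j is j'.+1 then N r :\: removed L a j' else N r.

Definition min_empty (F : nat -> {set T}) (m : nat) (S : {set 'I_m}) : bool :=
  (\bigcap_(r in S) F (nat_of_ord r) == set0) &&
  [forall S' : {set 'I_m}, (S' \proper S) ==> (\bigcap_(r in S') F (nat_of_ord r) != set0)].

Definition is_run (l : nat) (N : nat -> {set T}) (t : nat) (L : nat -> nat)
    (a : nat -> nat -> T) : Prop :=
  [/\ L 0 = l,
      forall j i, j <= t -> i < L j ->
        a j i \in \bigcap_(r < L j | nat_of_ord r != i) trunc N L a j r,
      forall j, j < t ->
        [/\ L j.+1 <= L j, 4 <= L j.+1 &
            min_empty (fun r => N r :\: removed L a j) [set r : 'I_(L j) | r < L j.+1]] &
      forall S : {set 'I_(L t)},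
        min_empty (fun r => N r :\: removed L a t) S -> #|S| = 2 \/ #|S| = 3].

Definition garbage (l : nat) (N : nat -> {set T}) (t : nat) (L : nat -> nat)
    (a : nat -> nat -> T) : {set T} :=
  union_V l N :\: removed L a t.

Definition private_vertex (N : nat -> {set T}) (L : nat -> nat) (j i : nat) (v : T) :=
  v \in N i /\ forall r, r < L j -> r != i -> v \notin N r.

Definition private_pair (N : nat -> {set T}) (L : nat -> nat) (j i : nat) (p : {set T}) :=
  [/\ #|p| = 2, p \subset N i & forall r, r < L j -> r != i -> ~~ (p \subset N r)].

End Defs.

(* Main.v *)
Require Import Defs.
From mathcomp Require Import all_boot.
Set Implicit Arguments. Unset Strict Implicit. Unset Printing Implicit Defensive.

Section Aux.
Variables (T : finType) (l : nat) (N : nat -> {set T}) (t : nat) (L : nat -> nat) (a : nat -> nat -> T).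

Lemma trunc_sub s r : trunc N L a s r \subset N r.
Proof. by case: s => [|s] /=; [exact: subxx | exact: subsetDl]. Qed.

Lemma Lge4 : is_run l N t L a -> 4 <= l -> forall s, s <= t -> 4 <= L s.
Proof.
case=> L0 _ H3 _ l4 [|s] st; first by rewrite L0.
by have [] := H3 s st.
Qed.

Lemma Lmono : is_run l N t L a -> forall s j, s <= j -> j <= t -> L j <= L s.
Proof.
case=> _ _ H3 _ s; elim=> [|j IH] sj jt.
  by move: sj; rewrite leqn0 => /eqP ->.
move: sj; rewrite leq_eqVlt => /orP [/eqP -> // | sj].
have [H _ _] := H3 j jt.
exact: leq_trans H (IH sj (ltnW jt)).
Qed.

Lemma a_in : is_run l N t L a -> forall s i' r, s <= t -> i' < L s -> r < L s -> r != i' ->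
  a s i' \in N r.
Proof.
move=> R s i' r st hi hr ri; have [_ H2 _ _] := R.
have := H2 s i' st hi => /bigcapP /(_ (Ordinal hr) ri) Hm.
exact: (subsetP (trunc_sub s r)).
Qed.

End Aux.

Lemma notsub (T : finType) (C U M : {set T}) : C :&: (U :\: M) != set0 -> ~~ (C \subset M).
Proof.
apply: contra => /subsetP sCN; apply/eqP/setP=> x; rewrite !inE.
by case xC: (x \in C) => //=; rewrite sCN.
Qed.

Theorem lemma4 (T : finType) (k l : nat) (N : nat -> {set T})
    (t : nat) (L : nat -> nat) (a : nat -> nat -> T)
    (j i : nat) (Y C : {set T}) :
  good_family k l N -> 4 <= l -> is_run l N t L a ->
  j <= t -> i < L j ->
  Y \subset N i -> #|Y| <= j ->
  #|C| = 3 ->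
  C \subset (N i :|: [set a (nat_of_ord s) i | s : 'I_j.+1]) :\: Y ->
  (forall r, r < l -> C :&: (union_V l N :\: N r) != set0) ->
  let p := C :&: N i in
  [/\ #|p| = 1 \/ #|p| = 2,
      forall v, p = [set v] ->
        v \in (N i :\: Y) :&: garbage l N t L a /\ private_vertex N L j i v &
      #|p| = 2 -> p \subset N i :\: Y /\ private_pair N L j i p].
Proof.
move=> _ l4 R jt ij _ _ C3 sC HC p.
have [L0 _ _ _] := R.
have Lj4 := Lge4 R l4 jt.
have Ljl : L j <= l.
  by rewrite -L0; have := Lmono R (leq0n j) jt.
have il : i < l := leq_trans ij Ljl.
have Hr : forall r, r < L j -> r != i -> ~~ (C \subset N r) /\ C :\: N i \subset N r.
  move=> r rj ri; split; first exact: notsub (HC r (leq_trans rj Ljl)).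
  apply/subsetP=> x; rewrite inE => /andP [xNi xC].
  have := subsetP sC x xC; rewrite !inE (negbTE xNi) /= => /andP [_ /imsetP [s _ ->]].
  have sj : s <= j by rewrite -ltnS.
  have Ljs := Lmono R sj jt.
  apply: (a_in R) => //; first exact: leq_trans sj jt.
    exact: leq_trans ij Ljs.
  exact: leq_trans rj Ljs.
have Csplit : forall r, r < L j -> r != i -> ~~ (p \subset N r).
  move=> r rj ri; have [H1 H2] := Hr r rj ri; apply: contra H1 => pr.
  apply/subsetP=> x xC; case xNi: (x \in N i).
    by apply: (subsetP pr); rewrite inE xC xNi.
  by apply: (subsetP H2); rewrite inE xNi xC.
have pNY : p \subset N i :\: Y.
  apply/subsetP=> x; rewrite inE => /andP [xC xNi].
  by have := subsetP sC x xC; rewrite !inE xNi => /andP [-> _].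
have [r0 [r0j r0i]] : exists r0, r0 < L j /\ r0 != i.
  case: (eqVneq i 0) => [->|i0]; first by exists 1; split => //; exact: leq_trans Lj4.
  by exists 0; split => //; [exact: leq_trans Lj4 | rewrite eq_sym].
split.
- have : #|p| <= 3 by rewrite -C3; apply: subset_leq_card; exact: subsetIl.
  have p0 : #|p| != 0.
    apply/negP => /eqP /cards0_eq p0; have := Csplit r0 r0j r0i; by rewrite p0 sub0set.
  have p3 : #|p| != 3.
    apply/negP => /eqP p3.
    have eCp : p = C by apply/eqP; rewrite eqEcard subsetIl p3 C3 leqnn.
    have := notsub (HC i il); by rewrite -eCp subsetIr.
  move: p0 p3; case: #|p| => [|[|[|[|n]]]] //= _ _ _; by [left | right].
- move=> v pv.
  have vp : v \in p by rewrite pv set11.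
  have vNi : v \in N i by move: vp; rewrite inE => /andP [].
  have priv : private_vertex N L j i v.
    split => // r rj ri; apply/negP => vr.
    have := Csplit r rj ri; by rewrite pv sub1set vr.
  split => //; rewrite inE (subsetP pNY v vp) /= /garbage inE.
  apply/andP; split; last by apply/bigcupP; exists (Ordinal il).
  apply/negP => /bigcupP [s _ /imsetP [i' _ vE]].
  have st : s <= t by rewrite -ltnS.
  have Ls4 := Lge4 R l4 st.
  have [r [r4 ri ri']] : exists r, [/\ r < 3, r != i & r != i'].
    case: (eqVneq i 0) => [->|i0].
      case: (eqVneq (nat_of_ord i') 1) => [->|i1]; first by exists 2.
      by exists 1; split => //; rewrite eq_sym.
    case: (eqVneq (nat_of_ord i') 0) => [->|i'0].
      case: (eqVneq i 1) => [->|i1]; first by exists 2.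
      by exists 1; split => //; rewrite eq_sym.
    by exists 0; split => //; rewrite eq_sym.
  have rj : r < L j by apply: leq_trans Lj4; apply: leq_trans r4 _.
  have rs : r < L s by apply: leq_trans Ls4; apply: leq_trans r4 _.
  have := (priv.2 r rj ri); rewrite vE (a_in R st (ltn_ord i') rs ri') //.
- move=> p2; split => //; split => //; first exact: subsetIr.
Qed.
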